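(* Let $V=\{1,\dots,p\}$ and $F:2^V\to\mathbb{R}$ be submodular, nondecreasing, with $F(\varnothing)=0$ and $F(\{k\})>0$ for all $k$; let $\Omega(w)=f(|w|)$ with $f$ the Lovász extension of $F$. Let $X\in\mathbb{R}^{n\times p}$ be fixed, $Q=\frac1nX^\top X$, and $y=Xw^\ast+\sigma\varepsilon$ with $w^\ast\in\mathbb{R}^p$, $\sigma>0$, $\varepsilon$ a standard normal vector in $\mathbb{R}^n$. Let $J$ be the smallest stable set containing $\mathrm{Supp}(w^\ast)$. Assume there is $\kappa>0$ such that for all $\Delta\in\mathbb{R}^p$ with $\Omega^J(\Delta_{J^c})\leqslant3\Omega_J(\Delta_J)$ one has $\Delta^\top Q\Delta\geqslant\kappa\|\Delta_J\|_2^2$. Let $\lambda>0$ and let $\hat w$ be a minimizer of $\frac{1}{2n}\|y-Xw\|_2^2+\lambda\Omega(w)$. Then, with probability larger than $1-P\big(\Omega^\ast(z)>\frac{\lambda\rho(J)\sqrt n}{2\sigma}\big)$, where $z$ is a centered multivariate normal vector with covariance $Q$, $$\Omega(\hat w-w^\ast)\leqslant\frac{24c(J)^2\lambda}{\kappa\rho(J)^2}\quad\text{and}\quad\frac1n\|X\hat w-Xw^\ast\|_2^2\leqslant\frac{36c(J)^2\lambda^2}{\kappa\rho(J)^2}.$$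
   Context: Lovász extension of a set-function $G$ on a finite set $W$: for $w\in\mathbb{R}_+^W$ with $w_{j_1}\geqslant\cdots\geqslant w_{j_m}\geqslant0$, it is $\sum_k w_{j_k}[G(\{j_1,\dots,j_k\})-G(\{j_1,\dots,j_{k-1}\})]$. A set $A\subset V$ is stable if every strict superset $B\supsetneq A$ has $F(B)>F(A)$ (stable sets are closed under intersection; $V$ is stable). For $K\subset V$: $\Omega_K(u)=f_K(|u|)$ on $\mathbb{R}^K$ with $f_K$ the Lovász extension of $F_K(A)=F(A)$, $A\subset K$; $\Omega^K(v)=f^K(|v|)$ on $\mathbb{R}^{K^c}$ with $f^K$ the Lovász extension of $F^K(A)=F(A\cup K)-F(K)$, $A\subset K^c$. $\Omega^\ast(s)=\max_{\Omega(w)\leqslant1}s^\top w$ is the dual norm. $\rho(J)=\min_{\varnothing\neq B\subset J^c}\frac{F(B\cup J)-F(J)}{F(B)}$ and $c(J)=\sup_{w_J\neq0}\Omega_J(w_J)/\|w_J\|_2$. *)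

(* Defs.v *)
From HB Require Import structures.
From mathcomp Require Import all_boot all_order all_algebra.
From mathcomp Require Import all_classical all_reals all_analysis.
Set Implicit Arguments.
Unset Strict Implicit.
Unset Printing Implicit Defensive.
Import Order.TTheory GRing.Theory Num.Theory.
Local Open Scope ring_scope.

Section Defs.
Variables (R : realType) (p : nat).

(* Lovász extension of G, restricted to the ground set D : {set 'I_p},
   evaluated at (the D-coordinates of) a nonnegative weight vector w:
   order the elements of D as j_1, ..., j_m with w_{j_1} >= ... >= w_{j_m}
   and return sum_k w_{j_k} [G({j_1..j_k}) - G({j_1..j_{k-1}})]. *)
Definition lovasz (D : {set 'I_p}) (G : {set 'I_p} -> R) (w : 'I_p -> R) : R :=
  let s := sort (fun i j => w j <= w i) (enum D) in
  \sum_(i <- s) w i * (G [set x in take (index i s).+1 s]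
                        - G [set x in take (index i s) s]).

Definition absv (w : 'cV[R]_p) : 'I_p -> R := fun i => `|w i 0|.

Definition Omega (F : {set 'I_p} -> R) (w : 'cV[R]_p) : R :=
  lovasz [set: 'I_p] F (absv w).

Definition Omega_low (F : {set 'I_p} -> R) (K : {set 'I_p}) (w : 'cV[R]_p) : R :=
  lovasz K F (absv w).

Definition Omega_up (F : {set 'I_p} -> R) (K : {set 'I_p}) (w : 'cV[R]_p) : R :=
  lovasz (~: K) (fun A => F (A :|: K) - F K) (absv w).

Definition Omega_dual (F : {set 'I_p} -> R) (s : 'cV[R]_p) : R :=
  sup [set (s^T *m w) 0 0 | w in [set w : 'cV[R]_p | Omega F w <= 1]]%classic.

(* rho(J) = min_{ {} <> B ⊂ J^c } (F(B ∪ J) - F(J)) / F(B)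
   (each term is <= 1 by submodularity; the neutral element 1 only matters
   when J = V, where the min is over the empty family) *)
Definition rho (F : {set 'I_p} -> R) (J : {set 'I_p}) : R :=
  \big[Order.min/1]_(B : {set 'I_p} | (0 < #|B|)%N && (B \subset ~: J))
     ((F (B :|: J) - F J) / F B).

Definition cJ (F : {set 'I_p} -> R) (J : {set 'I_p}) : R :=
  sup [set Omega_low F J w / Num.sqrt (\sum_(i in J) w i 0 ^+ 2)
      | w in [set w : 'cV[R]_p | exists i, i \in J /\ w i 0 != 0]]%classic.

Definition submodular (F : {set 'I_p} -> R) :=
  forall A B : {set 'I_p}, F (A :|: B) + F (A :&: B) <= F A + F B.

Definition nondecreasing_setfun (F : {set 'I_p} -> R) :=
  forall A B : {set 'I_p}, A \subset B -> F A <= F B.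

Definition stable (F : {set 'I_p} -> R) (A : {set 'I_p}) :=
  forall B : {set 'I_p}, A \proper B -> F A < F B.

Definition supp (w : 'cV[R]_p) : {set 'I_p} := [set i | w i 0 != 0].

End Defs.

Definition std_normal_vec {R : realType} {d : measure_display}
    {T : measurableType d} (P : probability T R) (n : nat)
    (eps : T -> 'cV[R]_n) : Prop :=
  (forall i, measurable_fun [set: T]%classic (fun t => eps t i 0)) /\
  (forall B : 'I_n -> set R, (forall i, measurable (B i)) ->
     P [set t | forall i, B i (eps t i 0)]%classic =
       (\prod_(i < n) normal_prob 0 1 (B i))%E).

(* Main.v *)
Require Import Defs.
From HB Require Import structures.
From mathcomp Require Import all_boot all_order all_algebra.
From mathcomp Require Import all_classical all_reals all_analysis.
From mathcomp Require Import lra ring.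
Import Order.TTheory GRing.Theory Num.Theory.
Local Open Scope ring_scope.

Lemma mxdot (R : realType) m (s w : 'cV[R]_m) : (s^T *m w) 0 0 = \sum_i s i 0 * w i 0.
Proof. by rewrite mxE; apply: eq_bigr => i _; rewrite mxE. Qed.

Section Lov.
Variables (R : realType) (p : nat).
Implicit Types (G : {set 'I_p} -> R) (s : seq 'I_p).

Definition gv G s (i : 'I_p) : R :=
  G [set x in take (index i s).+1 s] - G [set x in take (index i s) s].

Lemma gv_rcons G s x i : i \in s -> gv G (rcons s x) i = gv G s i.
Proof.
move=> iin; rewrite /gv -cats1 index_cat iin.
have hi := index_mem i s; rewrite -hi in iin.
by rewrite !takel_cat // ltnW.
Qed.

Lemma gv_last G s x : x \notin s ->
  gv G (rcons s x) x = G [set y in rcons s x] - G [set y in s].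
Proof.
move=> xs; rewrite /gv -cats1 index_cat (negbTE xs) /= eqxx addn0.
rewrite (take_size_cat _ (erefl (size s))) take_oversize //.
by rewrite size_cat /= addn1.
Qed.

Lemma sum_gv G s : G finset.set0 = 0 -> uniq s ->
  \sum_(i <- s) gv G s i = G [set x in s].
Proof.
move=> G0; elim/last_ind: s => [|s x IH].
  by move=> _; rewrite big_nil; have -> : [set x in [::] : seq 'I_p] = finset.set0
     by apply/setP=> y; rewrite !inE.
rewrite rcons_uniq => /andP[xs us].
rewrite -cats1 big_cat big_seq1 /=.
rewrite (eq_big_seq (gv G s)); last by move=> i iin; rewrite cats1 gv_rcons.
by rewrite IH // cats1 gv_last // addrC subrK.
Qed.

Definition submod G := forall A B : {set 'I_p}, G (A :|: B) + G (A :&: B) <= G A + G B.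

Lemma greedy_poly G s : submod G -> G finset.set0 = 0 -> uniq s ->
  forall A : {set 'I_p}, A \subset [set x in s] -> \sum_(i in A) gv G s i <= G A.
Proof.
move=> sm G0; elim/last_ind: s => [|s x IH].
  move=> _ A; rewrite finset.subset0 => /eqP ->; by rewrite big_set0 G0.
rewrite rcons_uniq => /andP[xs us] A sA.
case: (boolP (x \in A)) => xA.
  rewrite (bigD1 x) //= gv_last //.
  rewrite (eq_bigr (gv G s)); last first.
    move=> i /andP[iA ix]; apply: gv_rcons.
    by have := fintype.subsetP sA i iA; rewrite inE mem_rcons inE (negbTE ix).
  have -> : \sum_(i in A | i != x) gv G s i = \sum_(i in A :\ x) gv G s i.
    by apply: eq_bigl => i; rewrite !inE andbC.
  have h1 : A :\ x \subset [set y in s].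
    apply/fintype.subsetP=> i; rewrite !inE => /andP[ix iA].
    by have := fintype.subsetP sA i iA; rewrite inE mem_rcons inE (negbTE ix).
  have := IH us _ h1.
  have := sm A [set y in s].
  have -> : A :|: [set y in s] = [set y in rcons s x].
    apply/setP=> y; rewrite !inE mem_rcons inE; apply/idP/idP.
      case/orP=> [yA|->]; last by rewrite orbT.
      by have := fintype.subsetP sA y yA; rewrite inE mem_rcons inE.
    by case/orP=> [/eqP->|->]; rewrite ?xA ?orbT.
  have -> : A :&: [set y in s] = A :\ x.
    apply/setP=> y; rewrite !inE; apply/idP/idP.
      by case/andP=> yA ys; rewrite yA andbT; apply/eqP=> yx; rewrite -yx ys in xs.
    case/andP=> yx yA; rewrite yA /=.
    by have := fintype.subsetP sA y yA; rewrite inE mem_rcons inE (negbTE yx).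
  move=> h2 h3; lra.
rewrite (eq_bigr (gv G s)); last first.
  move=> i iA; apply: gv_rcons.
  have := fintype.subsetP sA i iA; rewrite inE mem_rcons inE.
  by case/orP=> // /eqP ix; rewrite -ix iA in xA.
apply: IH => //; apply/fintype.subsetP=> i iA.
have := fintype.subsetP sA i iA; rewrite !inE mem_rcons inE.
by case/orP=> // /eqP ix; rewrite -ix iA in xA.
Qed.


Lemma sum_set_seq (t : 'I_p -> R) s : uniq s ->
  \sum_(i <- s) t i = \sum_(i in [set x in s]) t i.
Proof. by move=> us; rewrite big_uniq //; apply: eq_bigl => i; rewrite inE. Qed.

Lemma lov_upper G s (w t : 'I_p -> R) : G finset.set0 = 0 -> uniq s ->
  (forall i j, i \in s -> j \in s -> (index i s <= index j s)%N -> w j <= w i) ->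
  (forall i, i \in s -> 0 <= w i) ->
  (forall A : {set 'I_p}, A \subset [set x in s] -> \sum_(i in A) t i <= G A) ->
  \sum_(i <- s) w i * t i <= \sum_(i <- s) w i * gv G s i.
Proof.
move=> G0; elim/last_ind: s w => [|s x IH] w.
  by move=> *; rewrite !big_nil.
rewrite rcons_uniq => /andP[xs us] hw w0 ht.
have idx i : i \in s -> index i (rcons s x) = index i s.
  by move=> iin; rewrite -cats1 index_cat iin.
have idxx : index x (rcons s x) = size s.
  by rewrite -cats1 index_cat (negbTE xs) /= eqxx addn0.
have ins i : i \in s -> i \in rcons s x by move=> iin; rewrite mem_rcons inE iin orbT.
have inx : x \in rcons s x by rewrite mem_rcons inE eqxx.
have wxi i : i \in s -> w x <= w i.
  move=> iin; apply: hw => //; first exact: ins.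
  by rewrite idxx idx // ltnW // index_mem.
pose w' := fun i => w i - w x.
have IH' := IH w' us.
have H1 : \sum_(i <- s) w' i * t i <= \sum_(i <- s) w' i * gv G s i.
  apply: IH' => [i j iin jin hij|i iin|A sA].
  - by rewrite /w' lerD2r; apply: hw; rewrite ?ins // !idx.
  - by rewrite /w' subr_ge0 wxi.
  - apply: ht; apply: (fintype.subset_trans sA); apply/fintype.subsetP => i; rewrite !inE; exact: ins.
have Ht : \sum_(i <- s) t i + t x <= G [set y in rcons s x].
  have := ht [set y in rcons s x] (subxx _).
  by rewrite -sum_set_seq ?rcons_uniq ?xs ?us // -cats1 big_cat big_seq1.
have Hg : \sum_(i <- s) gv G s i = G [set y in s] by rewrite sum_gv.
have e1 : \sum_(i <- s) w i * t i = \sum_(i <- s) w' i * t i + w x * \sum_(i <- s) t i.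
  rewrite mulr_sumr -big_split /=; apply: eq_bigr => i _; rewrite /w'; ring.
have e2 : \sum_(i <- s) w i * gv G s i = \sum_(i <- s) w' i * gv G s i + w x * \sum_(i <- s) gv G s i.
  rewrite mulr_sumr -big_split /=; apply: eq_bigr => i _; rewrite /w'; ring.
rewrite -!cats1 !big_cat !big_seq1 /=.
have e3 : \sum_(i <- s) w i * gv G (s ++ [:: x]) i = \sum_(i <- s) w i * gv G s i.
  by apply: eq_big_seq => i iin; rewrite cats1 gv_rcons.
rewrite e3 cats1 gv_last // e1 e2 Hg.
have wx0 : 0 <= w x by apply: w0.
have := ler_wpM2l wx0 Ht.
lra.
Qed.

Definition sD (D : {set 'I_p}) (w : 'I_p -> R) := sort (fun i j => w j <= w i) (enum D).

Lemma sD_uniq (D : {set 'I_p}) w : uniq (sD D w).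
Proof. by rewrite sort_uniq enum_uniq. Qed.

Lemma sD_mem (D : {set 'I_p}) w i : (i \in sD D w) = (i \in D).
Proof. by rewrite mem_sort mem_enum. Qed.

Lemma sD_set (D : {set 'I_p}) w : [set x in sD D w] = D.
Proof. by apply/setP => i; rewrite inE sD_mem. Qed.

Lemma sD_ord (D : {set 'I_p}) w i j : i \in sD D w -> j \in sD D w ->
  (index i (sD D w) <= index j (sD D w))%N -> w j <= w i.
Proof.
move=> iin jin hij.
have tr : transitive (fun i j : 'I_p => w j <= w i).
  by move=> a b c h1 h2; exact: le_trans h2 h1.
have rf : reflexive (fun i j : 'I_p => w j <= w i) by move=> a; exact: lexx.
have := @sorted_leq_index _ _ tr rf (sD D w) _ i j iin jin hij; apply.
apply: sort_sorted => a b; exact: le_total.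
Qed.

Lemma lovaszE (D : {set 'I_p}) G w : lovasz D G w = \sum_(i in D) w i * gv G (sD D w) i.
Proof.
rewrite /lovasz /= -/(sD D w) sum_set_seq ?sD_uniq // sD_set.
by apply: eq_bigr => i _; rewrite /gv.
Qed.

Lemma lov_ge (D : {set 'I_p}) G (w t : 'I_p -> R) : G finset.set0 = 0 ->
  (forall i, i \in D -> 0 <= w i) ->
  (forall A : {set 'I_p}, A \subset D -> \sum_(i in A) t i <= G A) ->
  \sum_(i in D) w i * t i <= lovasz D G w.
Proof.
move=> G0 w0 ht; rewrite /lovasz /= -/(sD D w).
have -> : \sum_(i in D) w i * t i = \sum_(i <- sD D w) w i * t i.
  by rewrite sum_set_seq ?sD_uniq // sD_set.
apply: lov_upper => //; first exact: sD_uniq.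
- exact: sD_ord.
- by move=> i; rewrite sD_mem; apply: w0.
- by rewrite sD_set.
Qed.

Lemma lov_greedy (D : {set 'I_p}) G w : submod G -> G finset.set0 = 0 ->
  forall A : {set 'I_p}, A \subset D -> \sum_(i in A) gv G (sD D w) i <= G A.
Proof.
move=> sm G0 A sA; apply: greedy_poly => //; first exact: sD_uniq.
by rewrite sD_set.
Qed.

Definition mono G := forall A B : {set 'I_p}, A \subset B -> G A <= G B.

Lemma gv_ge0 G s i : mono G -> 0 <= gv G s i.
Proof.
move=> mG; rewrite /gv subr_ge0; apply: mG; apply/fintype.subsetP => j; rewrite !inE.
move=> jin; have js := mem_take jin.
move: jin; rewrite !in_take // ltnS; exact: ltnW.
Qed.

Section Props.
Variables (D : {set 'I_p}) (G : {set 'I_p} -> R).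
Hypotheses (smG : submod G) (G0 : G finset.set0 = 0) (mG : mono G).

Lemma lov_ge0 w : (forall i, i \in D -> 0 <= w i) -> 0 <= lovasz D G w.
Proof.
move=> w0; rewrite lovaszE; apply: sumr_ge0 => i iD.
by apply: mulr_ge0; [exact: w0|exact: gv_ge0].
Qed.

Lemma lov_mono u v : (forall i, i \in D -> 0 <= u i) ->
  (forall i, i \in D -> u i <= v i) -> lovasz D G u <= lovasz D G v.
Proof.
move=> u0 uv; rewrite lovaszE.
have h := lov_ge D G v (gv G (sD D u)) G0 ^~ (lov_greedy D G u smG G0).
apply: le_trans (h _); last first.
  by move=> i iD; apply: le_trans (u0 i iD) (uv i iD).
apply: ler_sum => i iD; apply: ler_wpM2r; [exact: gv_ge0|exact: uv].
Qed.

Lemma lov_ext u v : (forall i, i \in D -> 0 <= u i) ->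
  (forall i, i \in D -> u i = v i) -> lovasz D G u = lovasz D G v.
Proof.
move=> u0 uv; apply/eqP; rewrite eq_le; apply/andP; split.
  by apply: lov_mono => // i iD; rewrite uv.
apply: lov_mono => [i iD|i iD]; by rewrite -uv // u0.
Qed.

Lemma lov_sub u v : (forall i, i \in D -> 0 <= u i) -> (forall i, i \in D -> 0 <= v i) ->
  lovasz D G (fun i => u i + v i) <= lovasz D G u + lovasz D G v.
Proof.
move=> u0 v0; rewrite lovaszE.
under eq_bigr do rewrite mulrDl.
rewrite big_split /=.
by apply: lerD; apply: lov_ge => //; apply: lov_greedy.
Qed.

Lemma lov_zero w : (forall i, i \in D -> w i = 0) -> lovasz D G w = 0.
Proof.
by move=> w0; rewrite lovaszE big1 // => i iD; rewrite w0 // mul0r.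
Qed.

End Props.

Lemma lov_scale (D : {set 'I_p}) G c w :
  lovasz D (fun A => c * G A) w = c * lovasz D G w.
Proof.
rewrite !lovaszE mulr_sumr; apply: eq_bigr => i _; rewrite /gv; ring.
Qed.

Section BigMinMax.
Variable (T : eqType).
Lemma bigmin_le (r : seq T) (P : pred T) (f : T -> R) x : x \in r -> P x ->
  \big[Order.min/1]_(i <- r | P i) f i <= f x.
Proof.
elim: r => // a r IH; rewrite inE big_cons => /orP[/eqP <-|xr] Px.
  by rewrite Px /= ge_min lexx.
by case: (P a) => //=; rewrite ?ge_min (IH xr Px) ?orbT.
Qed.

Lemma bigmin_ind (r : seq T) (P : pred T) (f : T -> R) (K : R -> Prop) :
  K 1 -> (forall x y, K x -> K y -> K (Order.min x y)) ->
  (forall i, P i -> K (f i)) -> K (\big[Order.min/1]_(i <- r | P i) f i).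
Proof.
move=> K1 Kop Kf; elim: r => [|a r IH]; first by rewrite big_nil.
by rewrite big_cons; case: ifP => Pa //; apply: Kop => //; apply: Kf.
Qed.

Lemma bigmax_ge (r : seq T) (f : T -> R) x : x \in r ->
  f x <= \big[Num.max/0]_(i <- r) f i.
Proof.
elim: r => // a r IH; rewrite inE big_cons => /orP[/eqP <-|xr].
  by rewrite le_max lexx.
by rewrite le_max (IH xr) orbT.
Qed.

Lemma bigmax_ind (r : seq T) (f : T -> R) (K : R -> Prop) :
  K 0 -> (forall x y, K x -> K y -> K (Num.max x y)) ->
  (forall i, K (f i)) -> K (\big[Num.max/0]_(i <- r) f i).
Proof.
move=> K1 Kop Kf; elim: r => [|a r IH]; first by rewrite big_nil.
by rewrite big_cons; apply: Kop.
Qed.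
End BigMinMax.

Lemma rho_le (F : {set 'I_p} -> R) (J B : {set 'I_p}) : (0 < #|B|)%N -> B \subset ~: J ->
  rho F J <= (F (B :|: J) - F J) / F B.
Proof.
move=> B0 BJ; rewrite /rho; apply: bigmin_le; first by rewrite mem_index_enum.
by rewrite B0 BJ.
Qed.

Section FP.
Variables (F : {set 'I_p} -> R) (J : {set 'I_p}).
Hypotheses (smF : submodular F) (F0 : F finset.set0 = 0)
  (mF : nondecreasing_setfun F) (posF : forall k : 'I_p, 0 < F [set k]).

Definition FJ := fun A => F (A :|: J) - F J.

Lemma smF' : submod F. Proof. exact: smF. Qed.
Lemma mF' : mono F. Proof. exact: mF. Qed.

Lemma FJ_sub : submod FJ.
Proof.
move=> A B; rewrite /FJ.
have := smF (A :|: J) (B :|: J).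
have -> : (A :|: J) :|: (B :|: J) = A :|: B :|: J.
  by apply/setP => i; rewrite !inE; case: (i \in A); case: (i \in B); case: (i \in J).
have -> : (A :|: J) :&: (B :|: J) = A :&: B :|: J.
  by apply/setP => i; rewrite !inE; case: (i \in A); case: (i \in B); case: (i \in J).
lra.
Qed.

Lemma FJ0 : FJ finset.set0 = 0.
Proof. by rewrite /FJ finset.set0U subrr. Qed.

Lemma FJ_mono : mono FJ.
Proof. by move=> A B sAB; rewrite /FJ lerD2r; apply: mF; apply: finset.setSU. Qed.

Lemma F_ge0 A : 0 <= F A.
Proof. by rewrite -F0; apply: mF; exact: finset.sub0set. Qed.

Lemma F_pos A : A != finset.set0 -> 0 < F A.
Proof.
case/finset.set0Pn => k kA; apply: lt_le_trans (posF k) _; apply: mF.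
by rewrite finset.sub1set.
Qed.

Lemma absv_ge0 (w : 'cV[R]_p) i : 0 <= absv w i.
Proof. exact: normr_ge0. Qed.

Lemma Omega_decomp (w : 'cV[R]_p) :
  Omega_low F J w + Omega_up F J w <= Omega F w.
Proof.
rewrite /Omega_low /Omega_up /Omega (lovaszE J) (lovaszE (~: J)).
pose t := fun i => if i \in J then gv F (sD J (absv w)) i
                   else gv FJ (sD (~: J) (absv w)) i.
have h := lov_ge [set: 'I_p] F (absv w) t F0 (fun i _ => absv_ge0 w i).
apply: le_trans (h _).
  rewrite [X in _ <= X](big_setID J) /= finset.setTI finset.setTD.
  apply: lerD; rewrite le_eqVlt; apply/orP; left; apply/eqP/eq_bigr => i; rewrite /t ?inE; [by move=> ->|by move/negbTE=> ->].
move=> A _; rewrite (big_setID J) /=.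
have h1 : \sum_(i in A :&: J) t i <= F (A :&: J).
  rewrite (eq_bigr (gv F (sD J (absv w)))); last by move=> i; rewrite inE /t => /andP[_ ->].
  by apply: lov_greedy; [exact: smF'|exact: F0|exact: finset.subsetIr].
have h2 : \sum_(i in A :\: J) t i <= FJ (A :\: J).
  rewrite (eq_bigr (gv FJ (sD (~: J) (absv w)))); last first.
    by move=> i; rewrite inE /t => /andP[/negbTE ->].
  apply: lov_greedy; [exact: FJ_sub|exact: FJ0|].
  by apply/fintype.subsetP => i; rewrite !inE => /andP[].
have e : A :\: J :|: J = A :|: J.
  by apply/setP => i; rewrite !inE; case: (i \in A); case: (i \in J).
have := smF A J; move: h2; rewrite /FJ e; lra.
Qed.
Lemma Omega_up_ext (u v : 'cV[R]_p) : (forall i, i \notin J -> u i 0 = v i 0) ->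
  Omega_up F J u = Omega_up F J v.
Proof.
move=> uv; rewrite /Omega_up; apply: lov_ext.
- exact: FJ_sub.
- exact: FJ0.
- exact: FJ_mono.
- by move=> i _; exact: absv_ge0.
- by move=> i; rewrite inE => iJ; rewrite /absv uv.
Qed.

Lemma Omega_low_tri (a b : 'cV[R]_p) :
  Omega_low F J (a + b) <= Omega_low F J a + Omega_low F J b.
Proof.
rewrite /Omega_low.
have h := lov_sub J F smF' F0 (absv a) (absv b) (fun i _ => absv_ge0 a i) (fun i _ => absv_ge0 b i).
apply: le_trans h.
apply: lov_mono; [exact: smF'|exact: F0|exact: mF'| |].
- by move=> i _; exact: absv_ge0.
- by move=> i _; rewrite /absv mxE; exact: ler_normD.
Qed.

Lemma Omega_low_opp (a : 'cV[R]_p) : Omega_low F J (- a) = Omega_low F J a.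
Proof.
rewrite /Omega_low; apply: lov_ext; [exact: smF'|exact: F0|exact: mF'| |].
- by move=> i _; exact: absv_ge0.
- by move=> i _; rewrite /absv mxE normrN.
Qed.

Lemma Omega_split (r : R) (w : 'cV[R]_p) : 0 <= r ->
  (forall A : {set 'I_p}, A \subset ~: J -> r * F A <= FJ A) ->
  r * Omega F w <= r * Omega_low F J w + Omega_up F J w.
Proof.
move=> r0 hr; rewrite /Omega /Omega_low /Omega_up (lovaszE [set: 'I_p]).
rewrite (big_setID J) /= finset.setTI finset.setTD mulrDr.
apply: lerD.
  apply: ler_wpM2l => //; apply: lov_ge => //; first by move=> i _; exact: absv_ge0.
  move=> A AJ; apply: lov_greedy; [exact: smF'|exact: F0|exact: finset.subsetT].
rewrite mulr_sumr.
have -> : \sum_(i in ~: J) r * (absv w i * gv F (sD [set: 'I_p] (absv w)) i) =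
   \sum_(i in ~: J) absv w i * (r * gv F (sD [set: 'I_p] (absv w)) i).
  by apply: eq_bigr => i _; ring.
apply: lov_ge; first exact: FJ0.
  by move=> i _; exact: absv_ge0.
move=> A AJ; rewrite -mulr_sumr; apply: le_trans (hr A AJ).
apply: ler_wpM2l => //; apply: lov_greedy; [exact: smF'|exact: F0|exact: finset.subsetT].
Qed.

Lemma Omega_restrict (w : 'cV[R]_p) : (forall i, i \notin J -> w i 0 = 0) ->
  Omega F w <= Omega_low F J w.
Proof.
move=> w0; rewrite /Omega /Omega_low (lovaszE [set: 'I_p]).
rewrite (big_setID J) /= finset.setTI finset.setTD.
rewrite [X in _ + X]big1 ?addr0; last first.
  by move=> i; rewrite inE => /w0 h; rewrite /absv h normr0 mul0r.
apply: lov_ge => //; first by move=> i _; exact: absv_ge0.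
move=> A AJ; apply: lov_greedy; [exact: smF'|exact: F0|exact: finset.subsetT].
Qed.

Lemma rho_gt0 : stable F J -> 0 < rho F J.
Proof.
move=> stJ; rewrite /rho; elim/big_rec: _ => // B x /andP[B0 BJ] x0.
rewrite lt_min x0 andbT.
rewrite card_gt0 in B0.
have FB := F_pos _ B0.
apply: divr_gt0 => //; rewrite subr_gt0; apply: stJ.
rewrite properE finset.subsetUr /=; apply/negP => sBJ.
case/finset.set0Pn: B0 => k kB.
have kJ : k \in J by apply: (fintype.subsetP sBJ); rewrite inE kB.
by have := fintype.subsetP BJ k kB; rewrite inE kJ.
Qed.

Lemma rho_le1 : rho F J <= 1.
Proof.
rewrite /rho; elim/big_rec: _ => // B x /andP[B0 BJ] x0.
  rewrite ge_min; apply/orP; left; rewrite card_gt0 in B0.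
  have FB := F_pos _ B0.
  rewrite ler_pdivrMr // mul1r lerBlDl.
  have := smF B J; have := F_ge0 (B :&: J); lra.
Qed.

Lemma rho_FJ : forall A : {set 'I_p}, A \subset ~: J -> rho F J * F A <= FJ A.
Proof.
move=> A AJ; case: (boolP (A == finset.set0)) => [/eqP ->|A0].
  by rewrite F0 mulr0 FJ0.
have FA := F_pos _ A0.
rewrite -ler_pdivlMr //; apply: rho_le => //; by rewrite card_gt0.
Qed.

Definition Mdual (s : 'cV[R]_p) :=
  \big[Num.max/0]_(A <- index_enum {set 'I_p}) ((\sum_(i in A) `|s i 0|) / F A).

Lemma Mdual_ge0 (s : 'cV[R]_p) : 0 <= Mdual s.
Proof. by rewrite /Mdual; elim/big_rec: _ => // A x _ x0; rewrite le_max x0 orbT. Qed.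

Lemma Mdual_ge (s : 'cV[R]_p) (A : {set 'I_p}) : (\sum_(i in A) `|s i 0|) / F A <= Mdual s.
Proof. exact: (bigmax_ge _ _ (fun B : {set 'I_p} => (\sum_(i in B) `|s i 0|) / F B) _ (mem_index_enum A)). Qed.

Lemma Mdual_le (s : 'cV[R]_p) c : (forall A : {set 'I_p}, (\sum_(i in A) `|s i 0|) / F A <= c) -> 0 <= c ->
  Mdual s <= c.
Proof.
move=> hA c0; rewrite /Mdual; elim/big_rec: _ => // A x _ xc.
by rewrite ge_max xc hA.
Qed.


Lemma Omega0 : Omega F 0 = 0.
Proof.
by rewrite /Omega; apply: lov_zero => i _; rewrite /absv mxE normr0.
Qed.

Lemma dual_bound (s w : 'cV[R]_p) : (s^T *m w) 0 0 <= Mdual s * Omega F w.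
Proof.
rewrite mxdot /Omega -lov_scale.
apply: le_trans (_ : \sum_(i in [set: 'I_p]) absv w i * `|s i 0| <= _).
  rewrite [X in _ <= X](eq_bigl (fun i => true)); last by move=> i; rewrite inE.
  apply: ler_sum => i _; rewrite /absv mulrC; apply: le_trans (ler_norm _) _.
  by rewrite normrM.
apply: lov_ge; first by rewrite F0 mulr0.
  by move=> i _; exact: absv_ge0.
move=> A _; case: (boolP (A == finset.set0)) => [/eqP ->|A0].
  by rewrite big_set0 F0 mulr0.
have FA := F_pos _ A0.
by rewrite -ler_pdivrMr //; exact: Mdual_ge.
Qed.

Let S (s : 'cV[R]_p) := [set (s^T *m w) 0 0 | w in [set w : 'cV[R]_p | Omega F w <= 1]]%classic.

Lemma S_ub (s : 'cV[R]_p) : has_ubound (S s).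
Proof.
exists (Mdual s) => y [w /= Hw <-].
apply: le_trans (dual_bound s w) _.
by rewrite -[X in _ <= X]mulr1; apply: ler_wpM2l => //; exact: Mdual_ge0.
Qed.

Lemma S_0 (s : 'cV[R]_p) : S s 0.
Proof.
by exists 0; rewrite /= ?Omega0 //; rewrite mxdot big1 // => i _; rewrite mxE mulr0.
Qed.

Lemma dual_eq (s : 'cV[R]_p) : Omega_dual F s = Mdual s.
Proof.
apply/eqP; rewrite eq_le; apply/andP; split.
  apply: ge_sup; first by exists 0; exact: S_0.
  move=> y [w /= Hw <-]; apply: le_trans (dual_bound s w) _.
  by rewrite -[X in _ <= X]mulr1; apply: ler_wpM2l => //; exact: Mdual_ge0.
have ub := ub_le_sup (S_ub s).
apply: Mdual_le; last exact: ub _ (S_0 s).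
move=> A; apply: ub.
pose sg := fun x : R => if 0 <= x then 1 else -1 : R.
have sgn x : x * sg x = `|x|.
  by rewrite /sg; case: ifP => h; [rewrite mulr1 ger0_norm|rewrite mulrN1 ler0_norm //; apply/ltW; rewrite ltNge h].
have nsg x : `|sg x| = 1 by rewrite /sg; case: ifP; rewrite ?normrN normr1.
pose w := \col_i (if i \in A then sg (s i 0) / F A else 0) : 'cV[R]_p.
exists w; last first.
  rewrite mxdot (bigID (fun i => i \in A)) /= [X in _ + X]big1 ?addr0; last first.
    by move=> i; rewrite mxE => /negbTE ->; rewrite mulr0.
  rewrite mulr_suml; apply: eq_bigr => i iA; rewrite mxE iA mulrA sgn //.
rewrite /= /Omega lovaszE (big_setID A) /= finset.setTI [X in _ + X]big1 ?addr0; last first.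
  by move=> i; rewrite !inE /absv mxE; case: (i \in A) => //= _; rewrite normr0 mul0r.
have FA0 := F_ge0 A.
have -> : \sum_(i in A) absv w i * gv F (sD [set: 'I_p] (absv w)) i =
   (F A)^-1 * \sum_(i in A) gv F (sD [set: 'I_p] (absv w)) i.
  rewrite mulr_sumr; apply: eq_bigr => i iA.
  by rewrite /absv mxE iA normrM nsg mul1r normfV ger0_norm.
have h := lov_greedy [set: 'I_p] F (absv w) smF' F0 A (finset.subsetT A).
have FV0 : 0 <= (F A)^-1 by rewrite invr_ge0.
apply: le_trans (ler_wpM2l FV0 h) _.
case: (eqVneq (F A) 0) => [->|FAn0]; first by rewrite invr0 mul0r.
by rewrite mulVf.
Qed.

Lemma sq_le (v : 'cV[R]_p) i : i \in J -> `|v i 0| <= Num.sqrt (\sum_(j in J) v j 0 ^+ 2).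
Proof.
move=> iJ; rewrite -sqrtr_sqr ler_sqrt; last by apply: sumr_ge0 => j _; exact: sqr_ge0.
rewrite (bigD1 i) //= lerDl; apply: sumr_ge0 => j _; exact: sqr_ge0.
Qed.

Lemma low_bound (v : 'cV[R]_p) :
  Omega_low F J v <= Num.sqrt (\sum_(j in J) v j 0 ^+ 2) * \sum_(i in J) F [set i].
Proof.
rewrite /Omega_low lovaszE mulr_sumr; apply: ler_sum => i iJ.
apply: ler_pM; [exact: absv_ge0|exact: gv_ge0 mF'|exact: sq_le|].
have := lov_greedy J F (absv v) smF' F0 [set i].
rewrite finset.sub1set iJ big_set1; exact.
Qed.

Lemma sq_pos (v : 'cV[R]_p) i : i \in J -> v i 0 != 0 ->
  0 < Num.sqrt (\sum_(j in J) v j 0 ^+ 2).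
Proof.
move=> iJ vi; rewrite sqrtr_gt0; apply: lt_le_trans (_ : 0 < v i 0 ^+ 2) _.
  by rewrite lt_def sqrf_eq0 vi sqr_ge0.
rewrite (bigD1 i) //= lerDl; apply: sumr_ge0 => j _; exact: sqr_ge0.
Qed.

Lemma cJ_bound (w : 'cV[R]_p) :
  Omega_low F J w <= cJ F J * Num.sqrt (\sum_(i in J) w i 0 ^+ 2).
Proof.
case: (boolP [exists i, (i \in J) && (w i 0 != 0)]) => [/existsP[i /andP[iJ wi]]|hn].
  have sp := sq_pos _ _ iJ wi.
  rewrite -ler_pdivrMr //.
  apply: ub_le_sup; last by exists w => //; exists i.
  exists (\sum_(i in J) F [set i]) => y [v [k [kJ vk]] <-].
  have sv := sq_pos _ _ kJ vk.
  by rewrite ler_pdivrMr // mulrC; exact: low_bound.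
have w0 : forall i, i \in J -> w i 0 = 0.
  move=> i iJ; apply/eqP; apply: contraNT hn => wi; apply/existsP; exists i.
  by rewrite iJ.
rewrite /Omega_low lov_zero //; first last.
  by move=> i iJ; rewrite /absv w0 // normr0.
rewrite big1 ?sqrtr0 ?mulr0 // => i iJ; by rewrite w0 // expr0n.
Qed.

End FP.

End Lov.

From mathcomp Require Import measurable_realfun.

Section Meas.
Variables (R : realType) (d : measure_display) (T : measurableType d).

Lemma meas_bigmax (X : Type) (r : seq X) (h : X -> T -> R) :
  (forall a, measurable_fun [set: T] (h a)) ->
  measurable_fun [set: T] (fun t => \big[Num.max/0]_(a <- r) h a t).
Proof.
move=> mh; elim: r => [|a r IH].
  by under eq_fun do rewrite big_nil; exact: measurable_cst.
under eq_fun do rewrite big_cons.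
exact: measurable_maxr.
Qed.

Lemma meas_sumin (X : finType) (A : {pred X}) (h : X -> T -> R) :
  (forall a, measurable_fun [set: T] (h a)) ->
  measurable_fun [set: T] (fun t => \sum_(a in A) h a t).
Proof.
move=> mh; under eq_fun do rewrite big_mkcond /=.
apply: measurable_sum => a; case: (a \in A); first exact: mh.
exact: measurable_cst.
Qed.

Lemma meas_level (f : T -> R) (c : R) : measurable_fun [set: T] f ->
  measurable [set t | f t <= c]%classic.
Proof.
move=> mf.
have mb : measurable_fun [set: T] (fun t => f t <= c).
  by apply: measurable_fun_ler => //; exact: measurable_cst.
have := mb measurableT [set true]%classic I.
by rewrite setTI.
Qed.
End Meas.

Lemma quadE (R : realType) n p (X : 'M[R]_(n, p)) (D : 'cV[R]_p) (a : R) :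
  (D^T *m (a *: (X^T *m X)) *m D) 0 0 = a * \sum_i (X *m D) i 0 ^+ 2.
Proof.
rewrite -scalemxAr -scalemxAl mxE; congr (_ * _).
rewrite !mulmxA -[D^T *m X^T]trmx_mul -mulmxA mxdot.
by apply: eq_bigr => i _; rewrite expr2.
Qed.

Lemma crossE (R : realType) n p (X : 'M[R]_(n, p)) (e : 'cV[R]_n) (D : 'cV[R]_p) :
  ((X^T *m e)^T *m D) 0 0 = \sum_i e i 0 * (X *m D) i 0.
Proof. by rewrite trmx_mul trmxK -mulmxA mxdot. Qed.

Theorem proposition7 (R : realType) (p n : nat) (F : {set 'I_p} -> R)
  (d : measure_display) (T : measurableType d) (P : probability T R)
  (X : 'M[R]_(n, p)) (wstar : 'cV[R]_p) (sigma lambda kappa : R)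
  (eps : T -> 'cV[R]_n) (J : {set 'I_p}) (what : T -> 'cV[R]_p) :
  (0 < n)%N ->
  submodular F -> nondecreasing_setfun F -> F finset.set0 = 0 ->
  (forall k : 'I_p, 0 < F [set k]) ->
  0 < sigma ->
  std_normal_vec P eps ->
  (* J = smallest stable set containing Supp(wstar) *)
  stable F J -> supp wstar \subset J ->
  (forall A, stable F A -> supp wstar \subset A -> J \subset A) ->
  0 < kappa ->
  (forall Delta : 'cV[R]_p,
     Omega_up F J Delta <= 3 * Omega_low F J Delta ->
     (Delta^T *m ((n%:R)^-1 *: (X^T *m X)) *m Delta) 0 0
       >= kappa * \sum_(i in J) Delta i 0 ^+ 2) ->
  0 < lambda ->
  (* what t minimizes (1/2n) ||y - X w||^2 + lambda Omega(w), y = X wstar + sigma eps *)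
  (forall t (w : 'cV[R]_p),
     let y := X *m wstar + sigma *: eps t in
     (2 * n%:R)^-1 * \sum_i (y - X *m what t) i 0 ^+ 2 + lambda * Omega F (what t)
     <= (2 * n%:R)^-1 * \sum_i (y - X *m w) i 0 ^+ 2 + lambda * Omega F w) ->
  (* z = X^T eps / sqrt n, a centered normal vector with covariance Q *)
  let z := fun t => (Num.sqrt (n%:R))^-1 *: (X^T *m eps t) in
  exists E : set T, measurable E /\
    (1 - P [set t | (lambda * rho F J * Num.sqrt (n%:R) / (2 * sigma)
                      < Omega_dual F (z t))%R]%classic <= P E)%E /\
    (forall t, E t ->
       Omega F (what t - wstar)
         <= 24 * cJ F J ^+ 2 * lambda / (kappa * rho F J ^+ 2) /\
       (n%:R)^-1 * \sum_i (X *m what t - X *m wstar) i 0 ^+ 2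
         <= 36 * cJ F J ^+ 2 * lambda ^+ 2 / (kappa * rho F J ^+ 2)).
Proof.
move=> n0 smF mF F0 posF sig0 [meps _] stJ suppJ _ k0 RE lam0 opt z.
set c := lambda * rho F J * Num.sqrt n%:R / (2 * sigma).
pose E := [set t | Mdual R p F (z t) <= c]%classic.
have dualE t : Omega_dual F (z t) = Mdual R p F (z t) by apply: dual_eq.
have mE : measurable E.
  apply: meas_level; rewrite /Mdual.
  apply: meas_bigmax => A.
  apply: measurable_funM; last exact: measurable_cst.
  apply: meas_sumin => i.
  apply: measurableT_comp; first exact: normr_measurable.
  rewrite /z.
  under eq_fun do rewrite mxE.
  apply: measurable_funM; first exact: measurable_cst.
  under eq_fun do rewrite mxE.
  apply: measurable_sum => j.
  under eq_fun do rewrite mxE.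
  apply: measurable_funM; [exact: measurable_cst|exact: meps].
exists E; split => //; split.
  have -> : [set t | c < Omega_dual F (z t)]%classic = (~` E)%classic.
    apply/seteqP; split => t /=; rewrite dualE ltNge.
      by move=> /negP.
    by move=> /negP.
  rewrite probability_setC //.
  have h0 : (0 <= P E)%E by exact: measure_ge0.
  have h1 : (P E <= 1)%E by exact: probability_le1.
  move: h0 h1; case: (P E) => [r| |] //= h0 h1.
  by rewrite -!EFinB lee_fin; lra.
move=> t Et; rewrite /E /= in Et.
set wh := what t.
set D := wh - wstar.
have ws0 : forall i, i \notin J -> wstar i 0 = 0.
  move=> i iJ; apply/eqP; apply: contraNT iJ => h.
  by apply: (fintype.subsetP suppJ); rewrite /supp inE h.
have r0 := rho_gt0 _ _ _ _ mF posF stJ.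
have r1 := rho_le1 _ _ _ J smF F0 mF posF.
set r := rho F J in r0 r1 *.
set cc := cJ F J.
set A := Omega_low F J D.
set B := Omega_up F J D.
set Dn := Omega F D.
have vE : X *m wh - X *m wstar = X *m D by rewrite mulmxBr.
rewrite vE.
set S := (n%:R)^-1 * \sum_i (X *m D) i 0 ^+ 2.
have N0 : 0 < (n%:R : R) by rewrite ltr0n.
have Dn0 : 0 <= Dn by apply: lov_ge0 => // i _; exact: absv_ge0.
have A0 : 0 <= A by apply: lov_ge0 => // i _; exact: absv_ge0.
have B0 : 0 <= B.
  apply: lov_ge0; first exact: FJ_mono.
  by move=> i _; exact: absv_ge0.
have S0 : 0 <= S.
  by apply: mulr_ge0; [rewrite invr_ge0 ltW|apply: sumr_ge0 => i _; exact: sqr_ge0].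
pose e := fun i => sigma * eps t i 0.
pose v := fun i => (X *m D) i 0.
have H := opt t wstar; rewrite /= in H.
have e1 : \sum_i (X *m wstar + sigma *: eps t - X *m wh) i 0 ^+ 2 =
          \sum_i (e i - v i) ^+ 2.
  apply: eq_bigr => i _; rewrite /e /v -vE !mxE; congr (_ ^+ 2); ring.
have e2 : \sum_i (X *m wstar + sigma *: eps t - X *m wstar) i 0 ^+ 2 =
          \sum_i e i ^+ 2.
  apply: eq_bigr => i _; rewrite /e !mxE; congr (_ ^+ 2); ring.
have e3 : \sum_i (e i - v i) ^+ 2 =
   \sum_i e i ^+ 2 - 2 * \sum_i e i * v i + \sum_i v i ^+ 2.
  rewrite mulr_sumr -sumrB -big_split /=; apply: eq_bigr => i _; ring.
have sn0 : 0 < Num.sqrt (n%:R : R) by rewrite sqrtr_gt0 ltr0n.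
have sn2 : Num.sqrt (n%:R : R) ^+ 2 = n%:R by rewrite sqr_sqrtr // ler0n.
have e4 : \sum_i e i * v i = sigma * Num.sqrt n%:R * ((z t)^T *m D) 0 0.
  rewrite /z linearZ /= -scalemxAl mxE crossE mulr_sumr mulr_sumr.
  apply: eq_bigr => i _; rewrite /e /v; field.
  by rewrite gt_eqF.
have hz : ((z t)^T *m D) 0 0 <= c * Dn.
  apply: le_trans (dual_bound _ _ _ F0 mF posF _ _) _.
  by apply: ler_wpM2r.
rewrite e1 e2 e3 e4 in H.
set sn := Num.sqrt (n%:R : R) in sn0 sn2 H *.
set Q := ((z t)^T *m D) 0 0 in H hz.
have hQ : 2 * ((n%:R)^-1 * (sigma * sn * Q)) <= lambda * r * Dn.
  have -> : lambda * r * Dn = 2 * ((n%:R)^-1 * (sigma * sn * (c * Dn))).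
    rewrite /c -/sn -/r -sn2; field; rewrite ?gt_eqF //.
  apply: ler_wpM2l => //; apply: ler_wpM2l; first by rewrite invr_ge0 ler0n.
  apply: ler_wpM2l => //; apply: mulr_ge0; exact: ltW.
have I1 : S <= lambda * r * Dn + 2 * lambda * (Omega F wstar - Omega F wh).
  rewrite invfM in H.
  have ni0 : 0 < (n%:R : R)^-1 by rewrite invr_gt0.
  move: H hQ; rewrite /S /v.
  set a := \sum_i e i ^+ 2.
  set s2 := \sum_i (X *m D) i 0 ^+ 2.
  set ni := (n%:R : R)^-1 in ni0 *.
  set K := sigma * sn * Q.
  set o1 := Omega F wh. set o2 := Omega F wstar.
  move=> H hQ. nra.
have I2 := Omega_decomp _ _ F J smF F0 wh.
have I3 : Omega_up F J wh = B.
  apply: (Omega_up_ext _ _ F J smF mF) => i iJ.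
  by rewrite /D !mxE ws0 // subr0.
have I4 : Omega_low F J wstar <= Omega_low F J wh + A.
  have -> : wstar = wh + - D by rewrite /D opprB addrC subrK.
  by rewrite -[A](Omega_low_opp _ _ F J smF F0 mF D); exact: Omega_low_tri.
have I5 : Omega F wstar <= Omega_low F J wstar.
  exact: (Omega_restrict _ _ F J smF F0).
have I6 : r * Dn <= r * A + B.
  apply: (Omega_split _ _ F J smF F0) => //; first exact: ltW.
  exact: rho_FJ.
have I6' : lambda * (r * Dn) <= lambda * (r * A + B) by apply: ler_wpM2l => //; exact: ltW.
have I7 : Omega F wstar - Omega F wh <= A - B by lra.
have I7' : 2 * lambda * (Omega F wstar - Omega F wh) <= 2 * lambda * (A - B).
  by apply: ler_wpM2l => //; rewrite mulr_ge0 // ltW.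
have rA : r * A <= A by rewrite -[X in _ <= X]mul1r; apply: ler_wpM2r.
have rA' : lambda * (r * A) <= lambda * A by apply: ler_wpM2l => //; exact: ltW.
have I8 : S <= lambda * (3 * A - B).
  move: I1; rewrite -mulrA; move=> I1; nra.
have cone : B <= 3 * A.
  have : 0 <= lambda * (3 * A - B) by apply: le_trans S0 I8.
  rewrite pmulr_rge0 // subr_ge0; exact.
have hRE := RE D cone; rewrite quadE -/S in hRE.
have I9 := cJ_bound _ _ F J smF F0 mF D.
rewrite -/A -/cc in I9.
set q := \sum_(i in J) D i 0 ^+ 2 in hRE I9.
have q0 : 0 <= q by apply: sumr_ge0 => i _; exact: sqr_ge0.
set sq := Num.sqrt q in I9.
have sq0 : 0 <= sq by exact: sqrtr_ge0.
have sq2 : sq ^+ 2 = q by rewrite sqr_sqrtr.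
have SA : S <= 3 * lambda * A by nra.
have h1 : S <= 3 * lambda * (cc * sq).
  apply: le_trans SA _; apply: ler_wpM2l; [by rewrite mulr_ge0 // ltW|exact: I9].
have hS : S * kappa <= 9 * lambda ^+ 2 * cc ^+ 2.
  have [S00|Sn0] := eqVneq S 0; first by rewrite S00; rewrite mul0r mulr_ge0 // ?sqr_ge0 // mulr_ge0 // sqr_ge0.
  have Sp : 0 < S by rewrite lt_def Sn0 S0.
  have h2 : S * S <= (3 * lambda * (cc * sq)) * (3 * lambda * (cc * sq)).
    by apply: ler_pM => //; apply: le_trans h1.
  have h3 : (3 * lambda * (cc * sq)) * (3 * lambda * (cc * sq)) * kappa
      = 9 * lambda ^+ 2 * cc ^+ 2 * (kappa * q) by rewrite -sq2; ring.
  have h4 : 9 * lambda ^+ 2 * cc ^+ 2 * (kappa * q) <= 9 * lambda ^+ 2 * cc ^+ 2 * S.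
    apply: ler_wpM2l; last exact: hRE.
    by apply: mulr_ge0; [apply: mulr_ge0 => //; exact: sqr_ge0|exact: sqr_ge0].
  have h5 : S * (S * kappa) <= S * (9 * lambda ^+ 2 * cc ^+ 2).
    have := ler_wpM2r (ltW k0) h2; rewrite h3 => h; nra.
  by rewrite ler_pM2l in h5.
have hA : A * kappa <= 3 * lambda * cc ^+ 2.
  have [sq00|sqn0] := eqVneq sq 0.
    have : A <= 0 by rewrite sq00 mulr0 in I9.
    move=> A00; have -> : A = 0 by apply/eqP; rewrite eq_le A00 A0.
    by rewrite mul0r; apply: mulr_ge0; [apply: mulr_ge0 => //; exact: ltW|exact: sqr_ge0].
  have sqp : 0 < sq by rewrite lt_def sqn0 sq0.
  have cc0 : 0 <= cc.
    have : 0 <= cc * sq by apply: le_trans A0 I9.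
    by rewrite pmulr_lge0.
  have hk : kappa * sq * sq <= 3 * lambda * cc * sq.
    have : kappa * q <= 3 * lambda * (cc * sq) by apply: le_trans hRE h1.
    by rewrite -sq2 expr2 mulrA mulrA.
  rewrite ler_pM2r // in hk.
  apply: le_trans (_ : cc * sq * kappa <= _); first by apply: ler_wpM2r => //; exact: ltW.
  nra.
split.
  rewrite ler_pdivlMr; last by rewrite mulr_gt0 // exprn_gt0.
  have hD : r * Dn <= 4 * A by nra.
  have e5 : Dn * (kappa * r ^+ 2) = (r * Dn) * (kappa * r) by ring.
  rewrite e5.
  have kr0 : 0 <= kappa * r by rewrite mulr_ge0 // ltW.
  apply: le_trans (ler_wpM2r kr0 hD) _.
  have : 4 * A * (kappa * r) <= 4 * A * kappa.
    apply: ler_wpM2l; first by rewrite mulr_ge0.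
    rewrite -[X in _ <= X]mulr1; apply: ler_wpM2l; [exact: ltW|exact: r1].
  have hc : 0 <= lambda * cc ^+ 2 by rewrite mulr_ge0 ?sqr_ge0 // ltW.
  nra.
rewrite ler_pdivlMr; last by rewrite mulr_gt0 // exprn_gt0.
have hr2 : r ^+ 2 <= 1 by rewrite expr2 -[1]mulr1; apply: ler_pM => //; exact: ltW.
nra.
Qed.
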